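(* Let $\ell$ be a prime, $\nu\ge 1$, and $R$ a $\mathbb{Z}/\ell^\nu$-algebra. Let $L$ be the free $R$-module on symbols $\alpha_1,\dots,\alpha_{\ell-1}$, and for $k\ge0$ let $\phi_k:L\to H_R$ be the $R$-linear map with $\phi_k(\alpha_i)=\alpha_{k\ell+i}$. Then $\bigoplus_k\phi_k:\bigoplus_{k=0}^\infty L\to H_R$ is an isomorphism of $R$-modules. In particular, the elements $\alpha_n$ with $n>0$ and $n\not\equiv0\pmod\ell$ form an $R$-basis of $H_R$.
   Context: $F\subseteq\mathbb{Q}[t]$ is the ring of numerical polynomials (those $f$ with $f(n)\in\mathbb{Z}$ for all integers $n\gg0$), free abelian on $\alpha_n=\binom tn$, $n\ge0$. $F_R=R\otimes F$ is the free $R$-module on the $\alpha_n$, and $T:F_R\to F_R$ (multiplication by $t$) is given by $T(\alpha_n)=n\alpha_n+(n+1)\alpha_{n+1}$. $H_R$ denotes the colimit of $F_R\xrightarrow{T}F_R\xrightarrow{T}F_R\to\cdots$, i.e. $H_R=F_R[1/t]=R\otimes H$ with $H=F[1/t]$; $\alpha_n$ also denotes the image in $H_R$ of the basis element $\alpha_n$ of the first copy of $F_R$. *)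

(* Defs.v *)
From HB Require Import structures.
From mathcomp Require Import all_boot all_order all_algebra.
Set Implicit Arguments. Unset Strict Implicit. Unset Printing Implicit Defensive.
Import Order.TTheory GRing.Theory Num.Theory.
Local Open Scope ring_scope.

(* F_R, the free R-module on the basis alpha_n = binom(t,n) (n : nat), is
   modelled by the R-module {poly R} used ONLY as a free R-module with basis
   indexed by nat: the element sum_n x_n alpha_n is the polynomial whose n-th
   coefficient is x_n.  The ring structure of {poly R} is never used. *)
Definition alpha (R : nzRingType) (n : nat) : {poly R} := 'X^n.

(* T : F_R -> F_R, multiplication by t:  T(alpha_n) = n alpha_n + (n+1) alpha_(n+1),
   extended R-linearly. *)
Definition Tmap (R : nzRingType) (x : {poly R}) : {poly R} :=
  \sum_(n < size x) x`_n *: (alpha R n *+ n + alpha R n.+1 *+ n.+1).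

(* H_R = colim (F_R --T--> F_R --T--> ...).  An element of H_R is represented
   by a pair (m, x): x in the m-th copy of F_R. *)
Definition Hrep (R : nzRingType) := (nat * {poly R})%type.

Definition Hequiv (R : nzRingType) (a b : Hrep R) : Prop :=
  exists k : nat, [/\ (a.1 <= k)%N, (b.1 <= k)%N &
    iter (k - a.1) (@Tmap R) a.2 = iter (k - b.1) (@Tmap R) b.2].

Definition Hadd (R : nzRingType) (a b : Hrep R) : Hrep R :=
  let k := maxn a.1 b.1 in
  (k, iter (k - a.1) (@Tmap R) a.2 + iter (k - b.1) (@Tmap R) b.2).

Definition Hscale (R : nzRingType) (r : R) (a : Hrep R) : Hrep R := (a.1, r *: a.2).

(* Image in H_R of an element x of the first copy of F_R; in particular
   Hincl (alpha R n) is the element alpha_n of H_R. *)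
Definition Hincl (R : nzRingType) (x : {poly R}) : Hrep R := (0%N, x).

(* L = free R-module on alpha_1, ..., alpha_(l-1): row vectors 'rV[R]_(l.-1),
   coordinate j : 'I_(l.-1) being the coefficient of alpha_(j+1).
   (+)_{k>=0} L : finite sequences d of elements of L, d`_k being the k-th
   component (components beyond size d are 0). *)
Definition DL (R : nzRingType) (l : nat) := seq 'rV[R]_(l.-1).

Definition DL_eq (R : nzRingType) (l : nat) (d d' : DL R l) : Prop :=
  forall k, d`_k = d'`_k.

Definition DL_add (R : nzRingType) (l : nat) (d d' : DL R l) : DL R l :=
  mkseq (fun k => d`_k + d'`_k) (maxn (size d) (size d')).

Definition DL_scale (R : nzRingType) (l : nat) (r : R) (d : DL R l) : DL R l :=
  map (fun v => r *: v) d.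

Definition phi (R : nzRingType) (l k : nat) (v : 'rV[R]_(l.-1)) : Hrep R :=
  Hincl (\sum_(j < l.-1) v 0 j *: alpha R (k * l + j.+1)).

Definition phi_sum (R : nzRingType) (l : nat) (d : DL R l) : Hrep R :=
  Hincl (\sum_(k < size d) \sum_(j < l.-1) (d`_k) 0 j *: alpha R (k * l + j.+1)).

(* Main.v *)
Require Import Defs.
From HB Require Import structures.
From mathcomp Require Import all_boot all_order all_algebra.
From mathcomp Require Import cyclic.
Import GRing.Theory.
Set Implicit Arguments. Unset Strict Implicit. Unset Printing Implicit Defensive.
Local Open Scope ring_scope.

Definition ev (R : nzRingType) (x : {poly R}) (n : nat) : R :=
  \sum_(i < n.+1) x`_i *+ 'C(n, i).

Lemma sum_shrink (V : nmodType) (f : nat -> V) (A B : nat) :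
  (forall i, (A <= i)%N -> f i = 0) -> (A <= B)%N ->
  \sum_(i < B) f i = \sum_(i < A) f i.
Proof.
move=> f0 AB; rewrite (big_ord_widen B f AB) [RHS]big_mkcond /=.
by apply: eq_bigr => i _; case: ltnP => // /f0 ->.
Qed.

Lemma evE (R : nzRingType) (x : {poly R}) n K :
  (size x <= K)%N -> \sum_(i < K) x`_i *+ 'C(n, i) = ev x n.
Proof.
move=> sK; rewrite /ev.
have H1 := @sum_shrink R (fun i => x`_i *+ 'C(n, i)) n.+1 (K + n.+1).
have H2 := @sum_shrink R (fun i => x`_i *+ 'C(n, i)) K (K + n.+1).
rewrite -H1 ?H2 ?leq_addr ?leq_addl //.
- by move=> i Hi; rewrite nth_default ?mul0rn // (leq_trans sK).
- by move=> i Hi; rewrite bin_small.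
Qed.

Lemma evD (R : nzRingType) (x y : {poly R}) n : ev (x + y) n = ev x n + ev y n.
Proof. by rewrite /ev -big_split; apply: eq_bigr => i _; rewrite coefD mulrnDl. Qed.

Lemma ev0 (R : nzRingType) n : ev (0 : {poly R}) n = 0.
Proof. by rewrite /ev big1 // => i _; rewrite coef0 mul0rn. Qed.

Lemma evN (R : nzRingType) (x : {poly R}) n : ev (- x) n = - ev x n.
Proof. by rewrite /ev -sumrN; apply: eq_bigr => i _; rewrite coefN mulNrn. Qed.

Lemma evB (R : nzRingType) (x y : {poly R}) n : ev (x - y) n = ev x n - ev y n.
Proof. by rewrite evD evN. Qed.

Lemma evZ (R : nzRingType) (c : R) (x : {poly R}) n : ev (c *: x) n = c * ev x n.
Proof. by rewrite /ev mulr_sumr; apply: eq_bigr => i _; rewrite coefZ mulrnAr. Qed.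

Lemma evMn (R : nzRingType) (x : {poly R}) k n : ev (x *+ k) n = ev x n *+ k.
Proof. by rewrite /ev -sumrMnl; apply: eq_bigr => i _; rewrite coefMn -!mulrnA mulnC. Qed.

Lemma evXn (R : nzRingType) j n : ev ('X^j : {poly R}) n = 1 *+ 'C(n, j).
Proof.
rewrite /ev (eq_bigr (fun i : 'I_n.+1 => (i == j :> nat)%:R *+ 'C(n, j))); last first.
  move=> i _; rewrite coefXn; case: eqP => [->|_] //=; by rewrite !mul0rn.
rewrite sumrMnl; case: (ltnP j n.+1) => Hj; last by rewrite bin_small // !mulr0n.
rewrite (bigD1 (Ordinal Hj)) //= eqxx big1 ?addr0 // => i /negPf.
by rewrite -val_eqE /= => ->.
Qed.

Lemma bin_id n i : ('C(n, i) * i + 'C(n, i.+1) * i.+1 = 'C(n, i) * n)%N.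
Proof.
rewrite [('C(n, i.+1) * _)%N]mulnC mul_bin_left.
case: (leqP i n) => H; last by rewrite bin_small // !(mul0n, muln0).
by rewrite [((n - i) * _)%N]mulnC -mulnDr subnKC.
Qed.

Lemma evT (R : nzRingType) (x : {poly R}) n : ev (Tmap x) n = ev x n *+ n.
Proof.
rewrite /Tmap (big_morph (fun p : {poly R} => ev p n) (fun a b => @evD R a b n) (ev0 R n)).
rewrite -(evE n (leqnn (size x))) -sumrMnl; apply: eq_bigr => i _.
rewrite evZ evD !evMn !evXn /alpha -!mulrnA -mulrnDr bin_id.
by rewrite mulrnAr mulr1 mulrnA.
Qed.

Lemma evIter (R : nzRingType) (x : {poly R}) k n :
  ev (iter k (@Tmap R) x) n = ev x n *+ (n ^ k).
Proof. by elim: k => [|k IH] /=; rewrite ?expn0 ?mulr1n // evT IH expnSr mulrnA. Qed.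

Definition lowzero (R : nzRingType) (p : nat) (x : {poly R}) :=
  forall i, (i < p)%N -> x`_i = 0.
Definition Sset (R : nzRingType) (l : nat) (x : {poly R}) :=
  forall n, (l %| n)%N -> x`_n = 0.

Lemma ev_at (R : nzRingType) p (x : {poly R}) : lowzero p x -> ev x p = x`_p.
Proof.
move=> lz; rewrite /ev big_ord_recr /= binn mulr1n big1 ?add0r // => i _.
by rewrite lz ?mul0rn.
Qed.

Lemma ev_low (R : nzRingType) p (x : {poly R}) n :
  lowzero p x -> (n < p)%N -> ev x n = 0.
Proof.
move=> lz np; rewrite /ev big1 // => i _; rewrite lz ?mul0rn //.
by apply: leq_ltn_trans np; rewrite -ltnS.
Qed.

Lemma low_of_ev (R : nzRingType) p (x : {poly R}) :
  (forall n, (n < p)%N -> ev x n = 0) -> lowzero p x.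
Proof.
elim: p => [|p IH] H i Hi //.
have lz : lowzero p x by apply: IH => n Hn; apply: H; exact: ltnW.
rewrite ltnS leq_eqVlt in Hi; case/orP: Hi => [/eqP ->|]; last exact: lz.
by rewrite -ev_at // H.
Qed.

Lemma ev_inj (R : nzRingType) (x y : {poly R}) :
  (forall n, ev x n = ev y n) -> x = y.
Proof.
move=> H; apply/polyP => i.
have lz : lowzero i.+1 (x - y) by apply: low_of_ev => n _; rewrite evB H subrr.
by apply/eqP; rewrite -subr_eq0 -coefB lz.
Qed.

Lemma natmod (R : nzRingType) L (r : R) a b :
  (L%:R : R) = 0 -> a = b %[mod L] -> r *+ a = r *+ b.
Proof.
move=> HL E.
have rl q : r *+ (q * L) = 0 by rewrite mulnC mulrnA -[r *+ L]mulr_natr HL mulr0 mul0rn.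
by rewrite (divn_eq a L) (divn_eq b L) !mulrnDr !rl !add0r E.
Qed.

Lemma unitn (R : nzRingType) L (r : R) a :
  (0 < L)%N -> (L%:R : R) = 0 -> coprime a L -> r *+ a = 0 -> r = 0.
Proof.
move=> L0 HL cop ra.
have t0 : (0 < totient L)%N by rewrite totient_gt0.
rewrite -[r]mulr1n -(natmod r HL (Euler_exp_totient cop)) -(prednK t0) expnS.
by rewrite mulrnA ra mul0rn.
Qed.

Lemma injS (R : nzRingType) l (y : {poly R}) :
  prime l -> Sset l y -> (forall n, ~~ (l %| n)%N -> ev y n = 0) -> y = 0.
Proof.
move=> pl Sy H.
have lz p : lowzero p y.
  elim: p => [|p IH] i Hi //.
  rewrite ltnS leq_eqVlt in Hi; case/orP: Hi => [/eqP ->|]; last exact: IH.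
  case: (boolP (l %| p)%N) => [/Sy //|nd]; by rewrite -ev_at // H.
by apply/polyP => i; rewrite coef0 (lz i.+1).
Qed.

Lemma size_Mn (R : nzRingType) (p : {poly R}) k : (size (p *+ k) <= size p)%N.
Proof.
elim: k => [|k IH]; first by rewrite mulr0n size_poly0.
by rewrite mulrS (leq_trans (size_polyD _ _)) // geq_max leqnn.
Qed.

Lemma sizeT (R : nzRingType) b (x : {poly R}) :
  (b%:R : R) = 0 -> (size x <= b)%N -> (size (Tmap x) <= b)%N.
Proof.
move=> Hb sx; rewrite /Tmap.
apply: (big_ind (fun p : {poly R} => (size p <= b)%N)).
- by rewrite size_poly0.
- by move=> p q Hp Hq; rewrite (leq_trans (size_polyD _ _)) // geq_max Hp.
move=> i _; rewrite (leq_trans (size_scale_leq _ _)) //.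
have ib : (i < b)%N by apply: leq_trans sx.
rewrite (leq_trans (size_polyD _ _)) // geq_max; apply/andP; split.
  by rewrite (leq_trans (size_Mn _ _)) // /alpha size_polyXn.
case: (ltnP i.+1 b) => H.
  by rewrite (leq_trans (size_Mn _ _)) // /alpha size_polyXn.
have -> : i.+1 = b by apply/eqP; rewrite eqn_leq H ib.
have -> : alpha R b *+ b = 0.
  by apply/polyP => j; rewrite coefMn coef0 -mulr_natr Hb mulr0.
by rewrite size_poly0.
Qed.

Definition Uop (R : nzRingType) (L : nat) (A : seq nat) (x : {poly R}) :=
  foldr (fun a y => Tmap y + y *+ (L - a)) x A.

Lemma sizeU (R : nzRingType) b L A (x : {poly R}) :
  (b%:R : R) = 0 -> (size x <= b)%N -> (size (Uop L A x) <= b)%N.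
Proof.
move=> Hb sx; elim: A => [|a A IH] //=.
rewrite (leq_trans (size_polyD _ _)) // geq_max sizeT //.
exact: leq_trans (size_Mn _ _) IH.
Qed.

Lemma evU (R : nzRingType) L A (x : {poly R}) n :
  ev (Uop L A x) n = ev x n *+ \prod_(a <- A) (n + (L - a)).
Proof.
elim: A => [|a A IH] /=; first by rewrite big_nil mulr1n.
by rewrite evD evT evMn IH -mulrnDr -mulrnA big_cons mulnC.
Qed.

Lemma natmod0 (R : nzRingType) L (r : R) a :
  (L%:R : R) = 0 -> (L %| a)%N -> r *+ a = 0.
Proof.
move=> HL /dvdnP [q ->].
by rewrite mulnC mulrnA -[r *+ L]mulr_natr HL mulr0 mul0rn.
Qed.

Definition Aset (l L : nat) := [seq a <- iota 0 L | ~~ (l %| a)%N].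
Definition Nf (l L n : nat) := (\prod_(a <- Aset l L) (n + (L - a)))%N.

Lemma l_dvd_L l nu : (0 < nu)%N -> (l %| l ^ nu)%N.
Proof. by move=> nu0; rewrite dvdn_exp. Qed.

Lemma N_dvd l nu n : prime l -> (0 < nu)%N -> ~~ (l %| n)%N -> (l ^ nu %| Nf l (l ^ nu) n)%N.
Proof.
move=> pl nu0 nd; set L := (l ^ nu)%N.
have L0 : (0 < L)%N by rewrite expn_gt0 prime_gt0.
have inA : ((n %% L)%N \in Aset l L).
  rewrite mem_filter mem_iota /= ltn_pmod // andbT.
  apply: contra nd => H; rewrite (divn_eq n L) dvdn_add //.
  by rewrite dvdn_mull // l_dvd_L.
rewrite /Nf (big_rem _ inA) /= dvdn_mulr //.
rewrite {1}(divn_eq n L) -addnA subnKC ?(ltnW (ltn_pmod _ _)) //.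
by rewrite dvdn_add // dvdn_mull.
Qed.

Lemma N_cop l nu p : prime l -> (0 < nu)%N -> (l %| p)%N -> coprime (Nf l (l ^ nu) p) (l ^ nu).
Proof.
move=> pl nu0 dp; rewrite coprime_pexpr // /Nf big_seq.
apply: (big_ind (fun m => coprime m l)); first by rewrite coprime1n.
  by move=> a b Ha Hb; rewrite coprimeMl Ha.
move=> a; rewrite mem_filter mem_iota add0n leq0n /= => /andP [na aL].
rewrite coprime_sym prime_coprime //; apply: contra na => H.
have : (l %| p + (l ^ nu - a) + a)%N.
  by rewrite -addnA subnK ?(ltnW aL) // dvdn_add // l_dvd_L.
by rewrite dvdn_addr.
Qed.

Definition zel (R : nzRingType) l nu p : {poly R} :=
  Uop (l ^ nu) (Aset l (l ^ nu))
      ('X^p *+ (Nf l (l ^ nu) p ^ (totient (l ^ nu)).-1)).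

Lemma Z1 (R : nzRingType) l nu p n :
  prime l -> (0 < nu)%N -> ((l ^ nu)%:R : R) = 0 -> ~~ (l %| n)%N ->
  ev (zel R l nu p) n = 0.
Proof. by move=> pl nu0 HL nd; rewrite /zel evU; apply: (natmod0 _ HL); exact: N_dvd. Qed.

Lemma Z2 (R : nzRingType) l nu p : lowzero p (zel R l nu p).
Proof.
apply: low_of_ev => n np.
by rewrite /zel evU evMn evXn bin_small // !mulr0n !mul0rn.
Qed.

Lemma Z3 (R : nzRingType) l nu p :
  prime l -> (0 < nu)%N -> ((l ^ nu)%:R : R) = 0 -> (l %| p)%N ->
  (zel R l nu p)`_p = 1.
Proof.
move=> pl nu0 HL dp; rewrite -(ev_at (@Z2 R l nu p)) /zel evU evMn evXn binn -!mulrnA mul1n.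
have L0 : (0 < l ^ nu)%N by rewrite expn_gt0 prime_gt0.
have t0 : (0 < totient (l ^ nu))%N by rewrite totient_gt0.
rewrite -[RHS]mulr1n; apply: (natmod _ HL).
rewrite -expnSr prednK //; exact: Euler_exp_totient (N_cop pl nu0 dp).
Qed.

Lemma Z4 (R : nzRingType) l nu p b :
  (b%:R : R) = 0 -> (p < b)%N -> (size (zel R l nu p) <= b)%N.
Proof.
move=> Hb pb; rewrite /zel sizeU //.
by rewrite (leq_trans (size_Mn _ _)) // size_polyXn.
Qed.

Lemma elimS (R : nzRingType) l nu b :
  prime l -> (0 < nu)%N -> ((l ^ nu)%:R : R) = 0 -> (b%:R : R) = 0 ->
  forall k i (x : {poly R}), (i + k = b)%N -> (size x <= b)%N -> lowzero i x ->
  exists y, Sset l y /\ forall n, ~~ (l %| n)%N -> ev y n = ev x n.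
Proof.
move=> pl nu0 HL Hb; elim=> [|k IH] i x ikb sx lx.
  exists x; split=> // n _.
  case: (ltnP n i) => ni; first exact: lx.
  by rewrite nth_default // (leq_trans sx) // -ikb addn0.
have ib : (i < b)%N by rewrite -ikb -addSnnS leq_addr.
have ikb' : (i.+1 + k = b)%N by rewrite addSnnS.
case: (boolP (l %| i)%N) => di.
  set x' := x - x`_i *: zel R l nu i.
  have sx' : (size x' <= b)%N.
    rewrite (leq_trans (size_polyD _ _)) // geq_max sx size_polyN.
    by rewrite (leq_trans (size_scale_leq _ _)) // Z4.
  have lx' : lowzero i.+1 x'.
    move=> j; rewrite ltnS leq_eqVlt => /orP [/eqP ->|ji].
      by rewrite coefB coefZ Z3 // mulr1 subrr.
    by rewrite coefB coefZ lx // Z2 // mulr0 subrr.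
  have [y [Sy Ey]] := IH _ _ ikb' sx' lx'.
  exists y; split=> // n nd; rewrite Ey // evB evZ Z1 // mulr0 subr0 //.
set x' := x - x`_i *: 'X^i.
have sx' : (size x' <= b)%N.
  rewrite (leq_trans (size_polyD _ _)) // geq_max sx size_polyN.
  by rewrite (leq_trans (size_scale_leq _ _)) // size_polyXn.
have lx' : lowzero i.+1 x'.
  move=> j; rewrite ltnS leq_eqVlt => /orP [/eqP ->|ji].
    by rewrite coefB coefZ coefXn eqxx mulr1 subrr.
  by rewrite coefB coefZ lx // coefXn (ltn_eqF ji) mulr0 subrr.
have [y [Sy Ey]] := IH _ _ ikb' sx' lx'.
exists (y + x`_i *: 'X^i); split.
  move=> n dn; rewrite coefD coefZ coefXn Sy // add0r.
  have -> : (n == i) = false by apply/negbTE; apply: contraNneq di => <-.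
  by rewrite mulr0.
by move=> n nd; rewrite evD Ey // evB subrK.
Qed.

Lemma surj_core (R : nzRingType) l nu :
  prime l -> (0 < nu)%N -> ((l ^ nu)%:R : R) = 0 ->
  forall m (x : {poly R}), exists y, Sset l y /\
    iter (m + nu) (@Tmap R) y = iter nu (@Tmap R) x.
Proof.
move=> pl nu0 HL m x.
have L0 : (0 < l ^ nu)%N by rewrite expn_gt0 prime_gt0.
have t0 : (0 < totient (l ^ nu))%N by rewrite totient_gt0.
set w := iter (m * (totient (l ^ nu)).-1) (@Tmap R) x.
have Hb : (((l ^ nu) * size w)%N%:R : R) = 0 by rewrite natrM HL mul0r.
have sw : (size w <= (l ^ nu) * size w)%N by rewrite leq_pmull.
have [y [Sy Ey]] := elimS pl nu0 HL Hb (add0n _) sw (fun i (H : (i < 0)%N) => match notF H with end).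
exists y; split=> //; apply: ev_inj => n; rewrite !evIter.
case: (boolP (l %| n)%N) => dn.
  have dL : (l ^ nu %| n ^ nu)%N := dvdn_exp2r nu dn.
  rewrite (natmod0 _ HL dL) (natmod0 _ HL) // expnD dvdn_mull //.
have cop : coprime n (l ^ nu) by rewrite coprime_pexpr // coprime_sym prime_coprime.
rewrite Ey // /w evIter -mulrnA; apply: (natmod _ HL).
rewrite -expnD.
have -> : (m * (totient (l ^ nu)).-1 + (m + nu) = totient (l ^ nu) * m + nu)%N.
  by rewrite addnA -mulnSr prednK // mulnC.
rewrite expnD expnM -modnMml -modnXm (Euler_exp_totient cop) modnXm exp1n modnMml mul1n.
done.
Qed.

Definition G (R : nzRingType) l (d : DL R l) k : {poly R} :=
  \sum_(j < l.-1) (d`_k) 0 j *: alpha R (k * l + j.+1).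

Definition phiP (R : nzRingType) l (d : DL R l) : {poly R} :=
  \sum_(k < size d) G d k.

Lemma phiP_wide (R : nzRingType) l (d : DL R l) K :
  (size d <= K)%N -> phiP d = \sum_(k < K) G d k.
Proof.
move=> sK; rewrite /phiP (@sum_shrink _ (G d) (size d) K) // => k Hk.
by rewrite /G nth_default // big1 // => j _; rewrite mxE scale0r.
Qed.

Lemma phiP_add (R : nzRingType) l (d d2 : DL R l) :
  phiP (DL_add d d2) = phiP d + phiP d2.
Proof.
rewrite {1}/phiP /DL_add size_mkseq (phiP_wide (leq_maxl (size d) (size d2))).
rewrite (phiP_wide (leq_maxr (size d) (size d2))) -big_split; apply: eq_bigr => k _.
rewrite /G nth_mkseq // -big_split; apply: eq_bigr => j _.
by rewrite mxE scalerDl.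
Qed.

Lemma phiP_scale (R : nzRingType) l r (d : DL R l) :
  phiP (DL_scale r d) = r *: phiP d.
Proof.
rewrite /phiP /DL_scale size_map scaler_sumr; apply: eq_bigr => k _.
rewrite /G scaler_sumr (nth_map 0) //; apply: eq_bigr => j _.
by rewrite mxE scalerA.
Qed.

Lemma idx_eq l k k' (j j' : nat) : (j < l.-1)%N -> (j' < l.-1)%N ->
  (k' * l + j'.+1 == k * l + j.+1)%N = (k' == k) && (j' == j).
Proof.
move=> jl j'l.
have l0 : (0 < l)%N by case: l jl {j'l} => [|l'] //.
have jl1 : (j.+1 < l)%N by rewrite -(prednK l0) ltnS.
have j'l1 : (j'.+1 < l)%N by rewrite -(prednK l0) ltnS.
apply/eqP/andP => [E|[/eqP -> /eqP ->]] //.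
have := congr1 (fun n => divn n l) E; have := congr1 (fun n => modn n l) E.
rewrite /= !modnMDl !divnMDl // !modn_small // !divn_small // !addn0.
by move=> [->] ->; rewrite !eqxx.
Qed.

Lemma phiP_coef (R : nzRingType) l (d : DL R l) k (j : 'I_(l.-1)) :
  (phiP d)`_(k * l + j.+1) = (d`_k) 0 j.
Proof.
rewrite (@phiP_wide R l d _ (leq_maxl (size d) k.+1)) coef_sum.
have E k' : (G d k')`_(k * l + j.+1) = if k' == k then (d`_k) 0 j else 0.
  rewrite /G coef_sum (bigD1 j) //= big1 ?addr0.
    rewrite coefZ /alpha coefXn eq_sym idx_eq //.
    by case: eqP => [->|]; rewrite ?eqxx ?mulr1 ?mulr0.
  move=> j' /negPf nj; rewrite coefZ /alpha coefXn eq_sym idx_eq //.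
  by rewrite -val_eqE /= in nj; rewrite nj andbF mulr0.
under eq_bigr do rewrite E.
rewrite (bigD1 (Ordinal (leq_maxr (size d) k.+1 : (k < maxn (size d) k.+1)%N))) //= eqxx.
by rewrite big1 ?addr0 // => i /negPf; rewrite -val_eqE /= => ->.
Qed.

Lemma phiP_S (R : nzRingType) l (d : DL R l) : Sset l (phiP d).
Proof.
move=> n dn; rewrite coef_sum big1 // => k _; rewrite coef_sum big1 // => j _.
rewrite coefZ /alpha coefXn.
case: eqP => [E|]; last by rewrite mulr0.
have l0 : (0 < l)%N := leq_ltn_trans (leq0n j) (leq_trans (ltn_ord j) (leq_pred l)).
have jl1 : (j.+1 < l)%N by have := ltn_ord j; rewrite -ltnS (prednK l0).
move: dn; rewrite /dvdn E modnMDl modn_small //.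
Qed.

Definition recon (R : nzRingType) l (y : {poly R}) : DL R l :=
  mkseq (fun k => \row_(j < l.-1) y`_(k * l + j.+1)) (size y).

Lemma recon_eq (R : nzRingType) l (y : {poly R}) :
  (0 < l)%N -> Sset l y -> phiP (recon l y) = y.
Proof.
move=> l0 Sy; apply/polyP => n.
case: (boolP (l %| n)%N) => dn; first by rewrite phiP_S // Sy.
have m0 : (0 < n %% l)%N by rewrite lt0n.
have jl : ((n %% l).-1 < l.-1)%N.
  by rewrite -ltnS (prednK l0) (prednK m0) ltn_pmod.
have En : n = ((n %/ l) * l + (Ordinal jl).+1)%N by rewrite /= prednK // -divn_eq.
rewrite [in LHS]En phiP_coef /recon.
case: (ltnP (n %/ l) (size y)) => H.
  by rewrite nth_mkseq // mxE -En.
rewrite nth_default ?size_mkseq // mxE nth_default //.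
apply: leq_trans H _; rewrite leq_div //.
Qed.

Lemma phi_sumE (R : nzRingType) l (d : DL R l) : phi_sum d = (0%N, phiP d).
Proof. by []. Qed.

Lemma sum_alpha (R : nzRingType) (c : {poly R}) :
  \sum_(n < size c) c`_n *: alpha R n = c.
Proof. by rewrite /alpha -poly_def coefK. Qed.

Lemma ev_cancel (R : nzRingType) l nu (y y' : {poly R}) k :
  prime l -> (0 < nu)%N -> ((l ^ nu)%:R : R) = 0 ->
  iter k (@Tmap R) y = iter k (@Tmap R) y' ->
  forall n, ~~ (l %| n)%N -> ev (y - y') n = 0.
Proof.
move=> pl nu0 HL E n nd.
have L0 : (0 < l ^ nu)%N by rewrite expn_gt0 prime_gt0.
have cop : coprime (n ^ k) (l ^ nu).
  by rewrite coprimeXl // coprime_pexpr // coprime_sym prime_coprime.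
apply: (unitn L0 HL cop).
by rewrite evB mulrnBl -!evIter E subrr.
Qed.

Unset Implicit Arguments.
Theorem theorem2p5 (l nu : nat) (R : nzRingType) :
  prime l -> (0 < nu)%N -> (l ^ nu)%:R = 0 :> R ->
  [/\ (forall d d' : DL R l,
         Hequiv (phi_sum (DL_add d d')) (Hadd (phi_sum d) (phi_sum d'))),
      (forall (r : R) (d : DL R l),
         Hequiv (phi_sum (DL_scale r d)) (Hscale r (phi_sum d))),
      (forall d d' : DL R l, Hequiv (phi_sum d) (phi_sum d') -> DL_eq d d'),
      (forall h : Hrep R, exists d : DL R l, Hequiv (phi_sum d) h)
  & (forall h : Hrep R, exists c : {poly R},
        (forall n, (n == 0)%N || (l %| n)%N -> c`_n = 0) /\
        Hequiv (Hincl (\sum_(n < size c) c`_n *: alpha R n)) h) /\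
    (forall c : {poly R},
        (forall n, (n == 0)%N || (l %| n)%N -> c`_n = 0) ->
        Hequiv (Hincl (\sum_(n < size c) c`_n *: alpha R n)) (Hincl 0) ->
        forall n, c`_n = 0)].
Proof.
move=> pl nu0 HL.
have l0 : (0 < l)%N by rewrite prime_gt0.
split.
- move=> d d'; exists 0%N; split=> //=.
  exact: (phiP_add d d').
- move=> r d; exists 0%N; split=> //=.
  exact: (phiP_scale r d).
- move=> d d' [k [_ _ E]]; rewrite !phi_sumE /= !subn0 in E.
  have Sy : Sset l (phiP d - phiP d').
    by move=> n dn; rewrite coefB !phiP_S // subrr.
  have := injS pl Sy (ev_cancel pl nu0 HL E); move/eqP; rewrite subr_eq0 => /eqP Ed.
  move=> k'; apply/rowP => j.
  by rewrite -!phiP_coef Ed.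
- move=> [m x]; have [y [Sy E]] := surj_core pl nu0 HL m x.
  exists (recon l y); rewrite phi_sumE recon_eq //.
  exists (m + nu)%N; split=> //=; first by rewrite leq_addr.
  by rewrite subn0 addKn.
split.
- move=> [m x]; have [y [Sy E]] := surj_core pl nu0 HL m x.
  exists y; split.
    by move=> n /orP [/eqP ->|]; [apply: Sy; rewrite dvdn0 | exact: Sy].
  rewrite sum_alpha; exists (m + nu)%N; split=> //=; first by rewrite leq_addr.
  by rewrite subn0 addKn.
move=> c Hc [k [_ _ E]]; rewrite sum_alpha /= !subn0 in E.
have Sc : Sset l (c - 0) by move=> n dn; rewrite subr0; apply: Hc; rewrite dn orbT.
have c0 : c - 0 = 0 := injS pl Sc (ev_cancel pl nu0 HL E).
have c1 : c = 0 by move: c0; rewrite subr0.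
by move=> n; rewrite c1 coef0.
Qed.
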